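(* Let $Q\ge2$, $\kappa\ge1$, and let $\mathbf p_{ql}=\mathbf p_{lq}=(p_{ql}(1),\dots,p_{ql}(\kappa))$, $1\le q\le l\le Q$, be probability vectors that are linearly independent in $\mathbb R^\kappa$. Let $A$ be the $Q^3\times\kappa^3$ matrix with rows indexed by $(z_1,z_2,z_3)\in\{1,\dots,Q\}^3$, columns indexed by $(x_{12},x_{13},x_{23})\in\{1,\dots,\kappa\}^3$, and entries $$A_{(z_1,z_2,z_3),(x_{12},x_{13},x_{23})}=p_{z_1z_2}(x_{12})\,p_{z_1z_3}(x_{13})\,p_{z_2z_3}(x_{23}).$$ Then $A$ has full row rank $Q^3$.
   Context: In the $\kappa$-state random graph mixture model, $A$ is the matrix of conditional probabilities of the edge states on the complete graph on $3$ nodes given the latent groups of the $3$ nodes, with $p_{ql}(k)=\mathbb P(X_{ij}=k\mid Z_i=q,Z_j=l)$. *)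

(* Defs.v *)
From HB Require Import structures.
From mathcomp Require Import all_boot all_order all_algebra.
Set Implicit Arguments. Unset Strict Implicit. Unset Printing Implicit Defensive.
Import Order.TTheory GRing.Theory Num.Theory.
Local Open Scope ring_scope.

(* Node groups are 'I_Q (i.e. {1..Q} shifted to {0..Q-1}), edge states 'I_k.
   p q l x = p_{ql}(x). *)

Definition pvec (R : nzRingType) (Q k : nat) (p : 'I_Q -> 'I_Q -> 'I_k -> R)
  (q l : 'I_Q) : 'rV[R]_k := \row_x p q l x.

Definition edge_prob_family (R : nzRingType) (Q k : nat) (p : 'I_Q -> 'I_Q -> 'I_k -> R)
  : seq 'rV[R]_k :=
  [seq pvec p ql.1 ql.2 | ql <- enum [pred ql : 'I_Q * 'I_Q | (ql.1 <= ql.2)%N]].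

Definition prob_vec (R : numDomainType) (k : nat) (v : 'I_k -> R) : Prop :=
  (forall x, 0 <= v x) /\ \sum_x v x = 1.

Definition Amx (R : nzRingType) (Q k : nat) (p : 'I_Q -> 'I_Q -> 'I_k -> R)
  : 'M[R]_(#|{: 'I_Q * 'I_Q * 'I_Q}|, #|{: 'I_k * 'I_k * 'I_k}|) :=
  \matrix_(i, j)
    let: (z1, z2, z3) := enum_val i in
    let: (x12, x13, x23) := enum_val j in
    p z1 z2 x12 * p z1 z3 x13 * p z2 z3 x23.

(* Main.v *)
Require Import Defs.
From HB Require Import structures.
From mathcomp Require Import all_boot all_order all_algebra.
Set Implicit Arguments. Unset Strict Implicit. Unset Printing Implicit Defensive.
Import Order.TTheory GRing.Theory Num.Theory.
Local Open Scope ring_scope.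

Lemma free_rowfree (R : fieldType) k (s : seq 'rV[R]_k) :
  free s -> row_free (\matrix_(i < size s) s`_i).
Proof.
move=> fs; rewrite -kermx_eq0; apply/rowV0P => v /sub_kermxP vM.
move: fs; rewrite -[s]/(tval (in_tuple s)) => /freeP /(_ (fun i => v 0 i)) H.
apply/rowP => j; rewrite [RHS]mxE; apply: H.
rewrite -[RHS]vM mulmx_sum_row; apply: eq_bigr => i _; by rewrite rowK.
Qed.

Lemma three (T : Type) (a b c d e f : T) :
  (a = d /\ b = e \/ a = e /\ b = d) ->
  (a = d /\ c = f \/ a = f /\ c = d) ->
  (b = e /\ c = f \/ b = f /\ c = e) -> (a, b, c) = (d, e, f).
Proof.
by case=> -[? ?]; case=> -[? ?]; case=> -[? ?]; subst; congruence.
Qed.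

Definition srt Q (q l : 'I_Q) := if (q <= l)%N then (q, l) else (l, q).

Lemma srt_eq Q (a b d e : 'I_Q) : srt a b = srt d e ->
  (a = d /\ b = e \/ a = e /\ b = d).
Proof. rewrite /srt; case: (leqP a b) => _; case: (leqP d e) => _ [-> ->]; auto. Qed.

Lemma triple_sum (R : comNzRingType) (I J K : finType) (f : I -> R) (g : J -> R) (h : K -> R) :
  \sum_(x : I * J * K) f x.1.1 * g x.1.2 * h x.2 =
  (\sum_i f i) * (\sum_j g j) * (\sum_l h l).
Proof.
rewrite -(pair_bigA _ (fun (ij : I * J) (l : K) => f ij.1 * g ij.2 * h l)) /=.
rewrite -(pair_bigA _ (fun i j => \sum_l f i * g j * h l)) /=.
under eq_bigr => i _ do under eq_bigr => j _ do rewrite -big_distrr /=.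
under eq_bigr => i _ do rewrite -big_distrl /=.
rewrite -big_distrl /=; congr (_ * _).
rewrite big_distrl /=; apply: eq_bigr => i _; by rewrite big_distrr.
Qed.

Theorem lemma5 (R : realFieldType) (Q k : nat) (p : 'I_Q -> 'I_Q -> 'I_k -> R)
  (hQ : (2 <= Q)%N) (hk : (1 <= k)%N)
  (hsym : forall q l, p q l = p l q)
  (hprob : forall q l, prob_vec (p q l))
  (hfree : free (edge_prob_family p)) :
  \rank (Amx p) = (Q ^ 3)%N.
Proof.
set s := edge_prob_family p.
set E := enum [pred ql : 'I_Q * 'I_Q | (ql.1 <= ql.2)%N].
have sE : s = map (fun ql => pvec p ql.1 ql.2) E by [].
have [D MD] := row_freeP (free_rowfree hfree).
have srtE q l : srt q l \in E.
  rewrite mem_enum /srt inE; case: (leqP q l) => //= h; exact: ltnW.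
have piP q l : (index (srt q l) E < size s)%N by rewrite sE size_map index_mem.
pose pi q l : 'I_(size s) := Ordinal (piP q l).
have Mp q l x : (\matrix_(i < size s) s`_i) (pi q l) x = p q l x.
  rewrite mxE /= sE (nth_map (q, l)) ?index_mem // nth_index // /pvec mxE /srt.
  by case: leqP => //= _; rewrite hsym.
have dual a b c : \sum_x p a b x * D x c = (pi a b == c)%:R.
  move/matrixP: (MD) => /(_ (pi a b) c); rewrite !mxE /= => <-.
  by apply: eq_bigr => x _; rewrite Mp.
have piI a b d e : pi a b = pi d e -> srt a b = srt d e.
  move/(congr1 val) => /= h.
  by rewrite -(nth_index (a, a) (srtE a b)) h nth_index.
have rf : row_free (Amx p).
  apply/row_freeP.
  exists (\matrix_(j, w) let: (x12, x13, x23) := enum_val j in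
          let: (w1, w2, w3) := enum_val w in
          D x12 (pi w1 w2) * D x13 (pi w1 w3) * D x23 (pi w2 w3)).
  apply/matrixP => i w; rewrite !mxE.
  under eq_bigr => j _ do rewrite !mxE.
  rewrite -(inj_eq enum_val_inj).
  case Ei: (enum_val i) => [[z1 z2] z3]; case Ew: (enum_val w) => [[w1 w2] w3].
  rewrite (reindex (@enum_rank _)) /=; last by apply: onW_bij; exact: enum_rank_bij.
  rewrite (eq_bigr (fun t => (p z1 z2 t.1.1 * D t.1.1 (pi w1 w2)) *
                   (p z1 z3 t.1.2 * D t.1.2 (pi w1 w3)) *
                   (p z2 z3 t.2 * D t.2 (pi w2 w3)))); last first.
    by case=> [[a b] c] _; rewrite enum_rankK /= mulrACA [X in X * _]mulrACA.
  rewrite (triple_sum (fun a => p z1 z2 a * D a (pi w1 w2))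
    (fun b => p z1 z3 b * D b (pi w1 w3)) (fun c => p z2 z3 c * D c (pi w2 w3))).
  rewrite !dual.
  case: eqP => h1; case: eqP => h2; case: eqP => h3; rewrite /= ?mul0r ?mulr0 ?mul1r //.
  - have := three (srt_eq (piI _ _ _ _ h1)) (srt_eq (piI _ _ _ _ h2)) (srt_eq (piI _ _ _ _ h3)).
    by move=> ->; rewrite eqxx.
  1-7: case: eqP => [[e1 e2 e3]|_]; [subst; by case: (h1 erefl) || case: (h2 erefl) || case: (h3 erefl) | by rewrite ?mul0r].
by rewrite (eqP rf) card_prod card_prod !card_ord expnS expnS expn1 mulnA.
Qed.
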